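(* Let $K>0$ and let $f$ be an integer-valued polynomial of degree $n\ge1$. Then the number of integers $m$ with $|f(m)|\le K$ is at most $n+4(K\,n!)^{1/n}$. In particular, for any finite set $S\subset\mathbb{Z}$ whose elements all have absolute value at most $K$, the number $E_S(f)$ of integers $m$ with $f(m)\in S$ satisfies $E_S(f)\le (1+4/e)\,n+O(\log n)$, where the implied constant depends only on $K$.
   Context: A polynomial $f\in\mathbb{Q}[x]$ is integer-valued if $f(m)\in\mathbb{Z}$ for every $m\in\mathbb{Z}$. For a finite set $S$, $E_S(f)=\#\{m\in\mathbb{Z}: f(m)\in S\}$. *)

(* Defs.v *)
From HB Require Import structures.
From mathcomp Require Import all_boot all_order all_algebra.
From mathcomp Require Import all_classical all_reals all_analysis.
Set Implicit Arguments. Unset Strict Implicit. Unset Printing Implicit Defensive.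
Import Order.TTheory GRing.Theory Num.Theory.
Local Open Scope ring_scope.

Definition int_valued (f : {poly rat}) : Prop :=
  forall m : int, f.[m%:~R] \is a Num.int.

(* "The number of integers m satisfying P is at most B":
   every finite list of pairwise distinct integers satisfying P has
   length at most B (this also forces the set to be finite). *)
Definition count_at_most (R : realType) (P : int -> Prop) (B : R) : Prop :=
  forall s : seq int, uniq s -> (forall m, m \in s -> P m) -> (size s)%:R <= B.

(* Main.v *)
Require Import Defs.
From HB Require Import structures.
From mathcomp Require Import all_boot all_order all_algebra.
From mathcomp Require Import all_classical all_reals all_analysis.
From mathcomp Require Import ring lra zify.
Import Order.TTheory GRing.Theory Num.Theory.
Local Open Scope ring_scope.
Section Alt.
Variable R : realType.

Lemma alt_size (m : nat) : forall (p : {poly R}) (x : nat -> R),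
  (forall i j, (i < j)%N -> (j <= m)%N -> x i < x j) ->
  (forall k, (k < m)%N -> p.[x k] * p.[x k.+1] < 0) ->
  p != 0 -> (m < size p)%N.
Proof.
elim: m => [|m IH] p x Hinc Halt pnz; first by rewrite size_poly_gt0.
have H := Halt m (ltnSn m).
have Hle : x m <= x m.+1 by apply/ltW/Hinc.
have [w /andP[w1 w2] rw] : exists2 w, x m <= w <= x m.+1 & root p w.
  case: (ltrP (p.[x m]) 0) => h.
  - apply: poly_ivt => //; apply/andP; split; [exact: ltW|nra].
  - have [|w hw rw] := @poly_ivt _ (- p) (x m) (x m.+1) Hle.
      by rewrite !hornerN; apply/andP; split; nra.
    by exists w => //; move: rw; rewrite /root hornerN oppr_eq0.
have wm : x m < w.
  rewrite lt_neqAle w1 andbT; apply/eqP => E.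
  move: rw; rewrite /root -E => /eqP E2; move: H; rewrite E2 mul0r ltxx.
  by [].
case/factor_theorem: rw => q Hq.
have qnz : q != 0 by apply: contraNneq pnz => q0; rewrite Hq q0 mul0r.
have -> : size p = (size q).+1.
  by rewrite Hq size_Mmonic ?monicXsubC // size_XsubC addn2.
rewrite ltnS; apply: (IH q x).
- by move=> i j ij jm; apply: Hinc => //; apply: (leq_trans jm).
- move=> k km.
  have := Halt k (ltnW (leq_trans km (ltnSn m))).
  rewrite Hq !hornerM !hornerXsubC.
  have a1 : x k - w < 0.
    rewrite subr_lt0; apply: (le_lt_trans _ wm).
    by apply/ltW/Hinc => //; apply: ltnW.
  have a2 : x k.+1 - w < 0.
    rewrite subr_lt0; apply: (le_lt_trans _ wm).
    case: (ltngtP k.+1 m) => [h'|h'|->]; first by apply/ltW/Hinc.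
      by rewrite ltnS leqNgt km in h'.
    exact: lexx.
  have uv : 0 < (x k - w) * (x k.+1 - w) by rewrite nmulr_rgt0.
  by rewrite mulrACA (pmulr_llt0 _ uv).
- exact: qnz.
Qed.
End Alt.
Section IntLead.

Definition delta (f : {poly rat}) := \sum_(1 <= i < size f) nderivn i f.

Lemma delta_horner f x : (delta f).[x] = f.[x + 1] - f.[x].
Proof.
rewrite /delta horner_sum (nderiv_taylor _ (mulrC x 1)).
have [s0|pos] := posnP (size f).
  move/eqP: s0; rewrite size_poly_eq0 => /eqP ->.
  by rewrite horner0 subr0 size_poly0 big_geq // big_ord0.
move: pos; case: (size f) => [//|n] _.
rewrite big_ord_recl /= nderivn0 expr0 mulr1 (addrC f.[x]) addrK big_add1 /= big_mkord.
by apply: eq_bigr => i _; rewrite expr1n mulr1.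
Qed.

Lemma delta_coef f k : (delta f)`_k = \sum_(1 <= i < size f) f`_(i + k) *+ 'C(i + k, i).
Proof. by rewrite /delta (coef_sum); apply: eq_bigr => i _; rewrite coef_nderivn. Qed.

Lemma int_lead (n : nat) : forall f : {poly rat}, size f = n.+1 -> int_valued f ->
  (n`!%:R * lead_coef f) \is a Num.int.
Proof.
elim: n => [|n IH] f sf fi.
  rewrite fact0 mul1r lead_coefE sf /= -horner_coef0.
  by have := fi 0; rewrite mulr0z.
set g := delta f.
have gc : forall k, (n < k)%N -> g`_k = 0.
  move=> k nk; rewrite delta_coef big_nat big1 // => i /andP[i1 _].
  rewrite nth_default ?mul0rn // sf; lia.
have gn : g`_n = lead_coef f *+ n.+1.
  rewrite delta_coef sf big_ltn // big_nat big1 ?addr0.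
    by rewrite add1n bin1 lead_coefE sf.
  move=> i /andP[i2 _]; rewrite nth_default ?mul0rn // sf; lia.
have lf : lead_coef f != 0 by rewrite lead_coef_eq0 -size_poly_gt0 sf.
have sg : size g = n.+1.
  apply/eqP; rewrite eqn_leq; apply/andP; split.
    by apply/leq_sizeP => j jn; apply: gc.
  rewrite ltnNge; apply/negP=> /leq_sizeP h; move: (h n (leqnn n)).
  by rewrite gn => /eqP; rewrite mulrn_eq0 (negbTE lf).
have gi : int_valued g.
  move=> m; rewrite /g delta_horner.
  have -> : (m%:~R + 1 : rat) = (m + 1)%:~R by rewrite intrD.
  by apply: rpredB.
have := IH g sg gi.
rewrite lead_coefE sg /= gn factS.
suff -> : (n.+1 * n`!)%:R * lead_coef f = n`!%:R * (lead_coef f *+ n.+1) :> rat by [].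
rewrite natrM; ring.
Qed.
End IntLead.
Section Cheb.
Variable R : realType.

Fixpoint chebp (n : nat) : {poly R} * {poly R} :=
  if n is n'.+1 then let p := chebp n' in (p.2, 2%:R *: (p.2 * 'X) - p.1)
  else (1, 'X).
Definition cheb n := (chebp n).1.

Lemma cos_rec (a b : R) : cos (a + b) = 2%:R * cos b * cos a - cos (a - b).
Proof. rewrite cosD cosB; ring. Qed.

Lemma chebp_cos n t :
  (chebp n).1.[cos t] = cos (n%:R * t) /\ (chebp n).2.[cos t] = cos (n.+1%:R * t).
Proof.
elim: n => [|n [IH1 IH2]] /=; first by rewrite hornerC hornerX mul0r cos0 mul1r.
split; first by [].
rewrite hornerD hornerN hornerZ hornerMX IH1 IH2.
have -> : n.+2%:R * t = n.+1%:R * t + t by rewrite -[n.+2]addn1 natrD mulrDl mul1r.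
rewrite cos_rec; congr (_ - cos _); first by ring.
rewrite -[n.+1]addn1 natrD; ring.
Qed.

Lemma cheb_cos n t : (cheb n).[cos t] = cos (n%:R * t).
Proof. exact: (chebp_cos n t).1. Qed.

Lemma chebp_size n :
  [/\ size (chebp n).2 = n.+2, lead_coef (chebp n).2 = 2%:R ^+ n
    & (size (chebp n).1 <= n.+1)%N].
Proof.
elim: n => [|n [s2 l2 s1]] /=.
  by rewrite size_polyX lead_coefX size_poly1 expr0.
have nz2 : (chebp n).2 != 0 by rewrite -size_poly_gt0 s2.
have two : (2%:R : R) != 0 by rewrite pnatr_eq0.
have sA : size (2%:R *: ((chebp n).2 * 'X)) = n.+3.
  by rewrite size_scale // size_mulX // s2.
have lt : (size (- (chebp n).1) < size (2%:R *: ((chebp n).2 * 'X)))%N.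
  by rewrite size_opp sA; apply: (leq_trans s1); rewrite ltnW.
split.
- by rewrite size_addl // sA.
- by rewrite lead_coefDl // lead_coefZ lead_coefMX l2 exprS.
- by rewrite s2.
Qed.

Lemma cheb_size n : size (cheb n.+1) = n.+2.
Proof. by have [] := chebp_size n. Qed.

Lemma cheb_lead n : lead_coef (cheb n.+1) = 2%:R ^+ n.
Proof. by have [] := chebp_size n. Qed.

Lemma cos_oddpihalf j : cos (j.*2.+1%:R * pi / 2%:R) = 0 :> R.
Proof.
elim: j => [|j IH]; first by rewrite mul1r cos_pihalf.
have -> : (j.+1).*2.+1%:R * pi / 2%:R = j.*2.+1%:R * pi / 2%:R + pi :> R.
  by rewrite doubleS -[j.*2.+3]addn2 natrD; field.
by rewrite cosDpi IH oppr0.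
Qed.

Lemma norm_cos_mulpi k : `|cos (k%:R * pi)| = 1 :> R.
Proof.
elim: k => [|k IH]; first by rewrite mul0r cos0 normr1.
by rewrite -addn1 natrD mulrDl mul1r cosDpi normrN.
Qed.

End Cheb.
Section Cheb2.
Variable R : realType.

Definition chz (n j : nat) : R := cos (j.*2.+1%:R * pi / (n.*2)%:R).

Lemma chz_arg_itv n j : (j < n)%N -> j.*2.+1%:R * pi / (n.*2)%:R \in `[0, pi : R].
Proof.
move=> jn; have pi0 := pi_gt0 R.
have n0 : (0 < n.*2)%N by rewrite double_gt0; apply: leq_ltn_trans jn.
have n0R : (0 : R) < (n.*2)%:R by rewrite ltr0n.
rewrite in_itv /=; apply/andP; split.
  by apply: divr_ge0; [apply: mulr_ge0; [apply: ler0n| exact: ltW]| exact: ltW].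
rewrite ler_pdivrMr // mulrC ler_pM2l //= ler_nat.
by rewrite ltn_double.
Qed.

Lemma cheb_root n j : (j < n)%N -> (cheb R n).[chz n j] = 0.
Proof.
move=> jn; rewrite /chz cheb_cos.
have n0 : (n%:R : R) != 0 by rewrite pnatr_eq0 -lt0n; apply: leq_ltn_trans jn.
have -> : n%:R * (j.*2.+1%:R * pi / (n.*2)%:R) = j.*2.+1%:R * pi / 2%:R :> R.
  rewrite -[n.*2]muln2 natrM; field.
  by rewrite n0.
exact: cos_oddpihalf.
Qed.

Lemma chz_inj n j1 j2 : (j1 < n)%N -> (j2 < n)%N -> chz n j1 = chz n j2 -> j1 = j2.
Proof.
move=> h1 h2 /cos_inj E.
have := E (chz_arg_itv _ _ h1) (chz_arg_itv _ _ h2).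
have n0R : (n.*2)%:R != (0 : R) by rewrite pnatr_eq0 double_eq0 -lt0n; apply: leq_ltn_trans h1.
move/(congr1 (fun x => x * (n.*2)%:R / pi)).
rewrite !divfK // !mulfK ?(gt_eqF (pi_gt0 R)) //.
by move/eqP; rewrite eqr_nat eqSS -!muln2 eqn_mul2r /= => /eqP.
Qed.

Lemma cheb_prod m x :
  (cheb R m.+1).[x] = 2%:R ^+ m * \prod_(j < m.+1) (x - chz m.+1 j).
Proof.
set rs := [seq chz m.+1 j | j <- iota 0 m.+1].
have roots : all (root (cheb R m.+1)) rs.
  apply/allP => y /mapP[j]; rewrite mem_iota add0n => /andP[_ jm] ->.
  by apply/eqP; apply: cheb_root.
have urs : uniq_roots rs.
  rewrite uniq_rootsE map_inj_in_uniq ?iota_uniq //.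
  by move=> a b; rewrite !mem_iota !add0n => /andP[_ ha] /andP[_ hb]; apply: chz_inj.
have [q Hq] := uniq_roots_prod_XsubC roots urs.
set P := \prod_(z <- rs) ('X - z%:P) in Hq.
have mP : P \is monic by apply: monic_prod_XsubC.
have sP : size P = m.+2 by rewrite size_prod_XsubC size_map size_iota.
have qnz : q != 0.
  apply/eqP => q0; move: (cheb_size R m); rewrite Hq q0 mul0r size_poly0.
  by [].
have sq : size q = 1%N.
  move: (cheb_size R m); rewrite Hq size_Mmonic // sP.
  by rewrite addnS /= => /eqP; rewrite -[m.+2]add1n eqn_add2r => /eqP.
have lq : q`_0 = 2%:R ^+ m.
  rewrite -(cheb_lead R m) Hq lead_coef_Mmonic // lead_coefE sq.
  done.
rewrite Hq hornerM (size1_polyC (eq_leq sq)) hornerC lq /P horner_prod.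
rewrite big_map -(big_mkord xpredT (fun j => x - chz m.+1 j)).
by congr (_ * _); apply: eq_bigr => i _; rewrite hornerXsubC.
Qed.

End Cheb2.
Section Cheb3.
Variable R : realType.

Lemma ang_itv (n k : nat) : (0 < n)%N -> (k <= n)%N -> k%:R * pi / n%:R \in `[0, pi : R].
Proof.
move=> n0 kn; have pi0 := pi_gt0 R.
have n0R : (0 : R) < n%:R by rewrite ltr0n.
rewrite in_itv /=; apply/andP; split.
  by apply: divr_ge0; [apply: mulr_ge0; [apply: ler0n| exact: ltW]| exact: ltW].
by rewrite ler_pdivrMr // mulrC ler_pM2l //= ler_nat.
Qed.

Lemma cheb_config (n : nat) (l : R) : (0 < n)%N -> 0 < l ->
  exists z c : nat -> R,
   [/\ z 0%N = 0,
      (forall k, (k <= n)%N -> 0 <= z k <= l),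
      (forall i j, (i < j)%N -> (j <= n)%N -> z i < z j),
      (forall j, (j < n)%N -> z j < c j < z j.+1) &
      (forall k, (k <= n)%N -> \prod_(j < n) `|z k - c j| = 2 * (l / 4) ^+ n)].
Proof.
move=> n0 l0.
have n0R : (0 : R) < n%:R by rewrite ltr0n.
have pi0 := pi_gt0 R.
pose th (k : nat) : R := k%:R * pi / n%:R.
exists (fun k => l / 2 * (1 - cos (th k))), (fun j => l / 2 * (1 - chz R n j)).
split.
- by rewrite /th mul0r mul0r cos0 subrr mulr0.
- move=> k _; have h1 := cos_geN1 (th k); have h2 := cos_le1 (th k).
  apply/andP; split; nra.
- move=> i j ij jn.
  have hc : cos (th j) < cos (th i).
    rewrite ltr_cos ?ang_itv //; last by apply: ltnW; apply: leq_trans jn.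
    by rewrite /th ltr_pM2r ?invr_gt0 // ltr_pM2r // ltr_nat.
  have l2 : 0 < l / 2 by apply: divr_gt0.
  rewrite ltr_pM2l // ltrD2l ltrN2 //.
- move=> j jn.
  have l2 : 0 < l / 2 by apply: divr_gt0.
  have mono : forall a b : R, a < b -> a * pi / n%:R < b * pi / n%:R.
    by move=> a b ab; rewrite ltr_pM2r ?invr_gt0 // ltr_pM2r.
  have cz : j.*2.+1%:R * pi / n.*2%:R = (j%:R + 1 / 2) * pi / n%:R :> R.
    rewrite -[n.*2]muln2 -[j.*2]muln2 -addn1 !natrD !natrM; field.
    by rewrite gt_eqF.
  have d1 : (0 < n.*2)%N by rewrite double_gt0.
  have d2 : (j.*2 < n.*2)%N by rewrite ltn_double.
  have A1 : chz R n j < cos (th j).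
    have jn1 : (j <= n)%N := ltnW jn.
    rewrite /chz ltr_cos ?ang_itv ?chz_arg_itv //.
    by rewrite cz /th; apply: mono; lra.
  have A2 : cos (th j.+1) < chz R n j.
    rewrite /chz ltr_cos ?ang_itv ?chz_arg_itv //.
    rewrite cz /th; apply: mono.
    have -> : (j.+1)%:R = j%:R + 1 :> R by rewrite -addn1 natrD.
    lra.
  apply/andP; split; rewrite ltr_pM2l // ltrD2l ltrN2 //.
- move=> k kn.
  have l2 : 0 <= l / 2 by apply: divr_ge0; apply: ltW.
  have -> : \prod_(j < n) `|l / 2 * (1 - cos (th k)) - l / 2 * (1 - chz R n j)|
      = \prod_(j < n) (l / 2 * `|cos (th k) - chz R n j|).
    apply: eq_bigr => j _; rewrite -mulrBr normrM ger0_norm //.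
    by congr (_ * _); rewrite -[in RHS]normrN; congr (`|_|); ring.
  rewrite big_split /= prodr_const card_ord.
  have [m nm] : exists m, n = m.+1 by exists n.-1; rewrite prednK.
  subst n.
  have := cheb_prod R m (cos (th k)); rewrite cheb_cos.
  have -> : m.+1%:R * th k = k%:R * pi.
    by rewrite /th mulrC divfK // gt_eqF.
  move/(congr1 Num.norm); rewrite norm_cos_mulpi normrM normr_prod.
  rewrite ger0_norm ?exprn_ge0 // => E.
  have -> : \prod_(i < m.+1) `|cos (th k) - chz R m.+1 i| = (2 ^+ m)^-1.
    have h2 : (2 : R) ^+ m != 0 by rewrite expf_neq0 // pnatr_eq0.
    by apply: (mulfI h2); rewrite mulfV // -E.
  have h2 : (2 : R) ^+ m != 0 by rewrite expf_neq0 // pnatr_eq0.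
  have four : (4 : R) ^+ m.+1 = 2 ^+ m.+1 * 2 ^+ m.+1.
    by rewrite -exprMn -natrM.
  by rewrite !expr_div_n four !exprS; field; rewrite h2 /=.
Qed.

End Cheb3.
Section Pert.
Variable R : realType.
Lemma pert_pos (u v : R) : `|u| < `|v| -> 0 < (v - u) * v.
Proof.
move=> h; have nu := normr_ge0 u.
case: (ltrP v 0) => hv.
  rewrite (ltr0_norm hv) in h; move: h; rewrite ltr_norml => /andP[h1 h2].
  nra.
rewrite (ger0_norm hv) in h; move: h; rewrite ltr_norml => /andP[h1 h2].
nra.
Qed.

Lemma pert_alt (u1 v1 u2 v2 : R) : `|u1| < `|v1| -> `|u2| < `|v2| -> v1 * v2 < 0 ->
  (v1 - u1) * (v2 - u2) < 0.
Proof.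
move=> /pert_pos h1 /pert_pos h2 h.
have : 0 < ((v1 - u1) * v1) * ((v2 - u2) * v2) by apply: mulr_gt0.
rewrite mulrACA => H.
by move: H; rewrite (nmulr_lgt0 _ h).
Qed.
End Pert.
Section Main.
Variable R : realType.

Lemma root_pow (y : R) (n : nat) : (0 < n)%N -> 0 <= y -> (y `^ n%:R^-1) ^+ n = y.
Proof.
move=> n0 y0; rewrite -powR_mulrn ?powR_ge0 // -powRrM mulVf ?powRr1 //.
by rewrite pnatr_eq0 -lt0n.
Qed.

Lemma main_count (n N : nat) (F : {poly R}) (K : R) (t : nat -> R) :
  (0 < n)%N -> 0 < K -> size F = n.+1 ->
  1 <= `|lead_coef F| * n`!%:R ->
  (forall i j, (i <= j)%N -> (j < N)%N -> j%:R - i%:R <= t j - t i) ->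
  (forall i, (i < N)%N -> `|F.[t i]| <= K) ->
  N%:R <= n%:R + 4 * ((K * n`!%:R) `^ (n%:R^-1)).
Proof.
move=> n0 K0 sF lF tgap tK.
set X := (K * n`!%:R) `^ n%:R^-1.
have KN0 : 0 < K * n`!%:R by rewrite mulr_gt0 // ltr0n fact_gt0.
have X0 : 0 < X by apply: powR_gt0.
have Xn : X ^+ n = K * n`!%:R by apply: root_pow => //; apply: ltW.
rewrite leNgt; apply/negP => HN.
set l := 4 * X.
have l0 : 0 < l by rewrite /l mulr_gt0.
have Hl : l < N%:R - n%:R by rewrite /l; lra.
have [z [c [z0 zb zinc zc zprod]]] := @cheb_config R n l n0 l0.
have zle : forall a b, (a <= b)%N -> (b <= n)%N -> z a <= z b.
  move=> a b ab bn; case: (ltngtP a b) => [h|h|->] //.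
  - by apply/ltW/zinc.
  - by rewrite ltnNge ab in h.
pose r k := (Num.trunc (z k) + k)%N.
have trk : forall k, (k <= n)%N -> (Num.trunc (z k))%:R <= z k < (Num.trunc (z k)).+1%:R.
  by move=> k kn; apply: truncn_itv; have /andP[] := zb k kn.
have rN : forall k, (k <= n)%N -> (r k < N)%N.
  move=> k kn; rewrite -(ltr_nat R) /r natrD.
  have /andP[h1 _] := trk k kn; have /andP[_ h2] := zb k kn.
  have : (k%:R : R) <= n%:R by rewrite ler_nat.
  lra.
have rgap : forall a b, (a <= b)%N -> (b <= n)%N ->
    (r a <= r b)%N /\ z b - z a <= (r b)%:R - (r a)%:R.
  move=> a b ab bn; case: (ltngtP a b) => [h|h|->]; last by split; [apply: leqnn | rewrite !subrr].
  - have an : (a <= n)%N by apply: ltnW; apply: leq_trans bn.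
    have /andP[ha1 ha2] := trk a an; have /andP[hb1 hb2] := trk b bn.
    have hab : a%:R + 1 <= (b%:R : R) by rewrite natr1 ler_nat.
    have zab := zle a b ab bn.
    have key : z b - z a < (r b)%:R - (r a)%:R.
      rewrite /r !natrD; rewrite -natr1 in hb2; lra.
    split; last exact: ltW.
    rewrite -(ler_nat R); lra.
  - by rewrite ltnNge ab in h.
pose x k := t (r k).
have xgap : forall a b, (a <= b)%N -> (b <= n)%N -> z b - z a <= x b - x a.
  move=> a b ab bn; have [h1 h2] := rgap a b ab bn.
  apply: (le_trans h2); apply: tgap => //; exact: rN.
pose rho j := x j + (c j - z j).
have sgn : forall k j, (k <= n)%N -> (j < n)%N ->
   ((k <= j)%N -> x k - rho j <= z k - c j /\ z k - c j < 0) /\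
   ((j < k)%N -> 0 < z k - c j /\ z k - c j <= x k - rho j).
  move=> k j kn jn; have /andP[cj1 cj2] := zc j jn; split => h.
  - have := xgap k j h (ltnW jn); have := zle k j h (ltnW jn).
    rewrite /rho; split; lra.
  - have := xgap j k (ltnW h) kn; have := zle j.+1 k h kn.
    rewrite /rho; split; lra.
pose P := \prod_(j < n) ('X - (rho j)%:P).
have Pv : forall y, P.[y] = \prod_(j < n) (y - rho j).
  by move=> y; rewrite /P horner_prod; apply: eq_bigr => j _; rewrite hornerXsubC.
have Pbig : forall k, (k <= n)%N -> 2 * K * n`!%:R <= `|P.[x k]|.
  move=> k kn; rewrite Pv normr_prod -mulrA -Xn.
  have -> : X = l / 4 by rewrite /l; field.
  rewrite -(zprod k kn).
  apply: ler_prod => j _; rewrite normr_ge0 /=.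
  have [h1 h2] := sgn k j kn (ltn_ord j).
  case: (leqP k j) => h.
  - have [e1 e2] := h1 h; rewrite !ltr0_norm //; [lra|lra].
  - have [e1 e2] := h2 h; rewrite !gtr0_norm //; lra.
have Palt : forall k, (k < n)%N -> P.[x k] * P.[x k.+1] < 0.
  move=> k kn; rewrite !Pv -big_split /= (bigD1 (Ordinal kn)) //=.
  have [h1 _] := sgn k k (ltnW kn) kn.
  have [_ h2] := sgn k.+1 k kn kn.
  have [e1 e2] := h1 (leqnn k); have [e3 e4] := h2 (ltnSn k).
  have neg : (x k - rho k) * (x k.+1 - rho k) < 0.
    by rewrite nmulr_rlt0; lra.

  rewrite (nmulr_rlt0 _ neg) ?prodr_gt0 // => j jk.
  have jk' : (nat_of_ord j != k) by [].
  have [g1 g2] := sgn k j (ltnW kn) (ltn_ord j).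
  have [g3 g4] := sgn k.+1 j kn (ltn_ord j).
  case: (ltngtP j k) => hj.
  - have [f1 f2] := g2 hj; have [f3 f4] := g4 (ltnW hj).
    by apply: mulr_gt0; lra.
  - have [f1 f2] := g1 (ltnW hj); have [f3 f4] := g3 hj.
    by rewrite nmulr_rgt0; lra.
  - by move: jk'; rewrite hj eqxx.
set a := lead_coef F.
have a0 : 0 < `|a|.
  rewrite lt_neqAle normr_ge0 andbT eq_sym; apply/eqP => a0.
  by move: lF; rewrite a0 mul0r ler10.
have aPbig : forall k, (k <= n)%N -> `|F.[x k]| < `|a * P.[x k]|.
  move=> k kn; have := tK (r k) (rN k kn); rewrite -/(x k) => Fk.
  have := Pbig k kn => Pk.
  rewrite normrM.
  have h : `|a| * (2 * K * n`!%:R) <= `|a| * `|P.[x k]| by rewrite ler_pM2l.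
  have h2 : `|a| * (2 * K * n`!%:R) = 2 * K * (`|a| * n`!%:R) by ring.
  rewrite h2 in h; nra.
pose G := a *: P - F.
have Gv : forall y, G.[y] = a * P.[y] - F.[y].
  by move=> y; rewrite /G hornerD hornerN hornerZ.
have Galt : forall k, (k < n)%N -> G.[x k] * G.[x k.+1] < 0.
  move=> k kn; rewrite !Gv; apply: pert_alt.
  - by apply: aPbig; apply: ltnW.
  - exact: aPbig.
  - have aa : 0 < a * a.
      have : a != 0 by rewrite -normr_gt0.
      by move=> an; rewrite -expr2 exprn_even_gt0.
    by rewrite mulrACA (pmulr_rlt0 _ aa); apply: Palt.
have Gnz : G != 0.
  apply/eqP => G0; have := aPbig 0%N (leq0n n).
  move: (Gv (x 0%N)); rewrite G0 horner0 => /eqP; rewrite eq_sym subr_eq0 => /eqP ->.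
  by rewrite ltxx.
have sP : size P = n.+1 by rewrite size_prod_XsubC [index_enum _]unlock -enumT size_enum_ord.
have mP : P \is monic by apply: monic_prod_XsubC.
have sG : (size G <= n)%N.
  apply/leq_sizeP => j jn; rewrite /G coefB coefZ.
  case: (ltngtP j n) => [h|h|->].
  - by rewrite ltnNge jn in h.
  - by rewrite !nth_default ?mulr0 ?subrr // ?sP ?sF.
  - have -> : P`_n = 1 by move/monicP: mP; rewrite lead_coefE sP.
    by rewrite mulr1 /a lead_coefE sF subrr.
have xinc : forall i j, (i < j)%N -> (j <= n)%N -> x i < x j.
  move=> i j ij jn; have := xgap i j (ltnW ij) jn; have := zinc i j ij jn; lra.
have := @alt_size R n G x xinc Galt Gnz.
by rewrite ltnNge sG.
Qed.
End Main.
Lemma sorted_gap (ss : seq int) : sorted <%O ss ->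
  forall d i, (i + d < size ss)%N -> (d%:Z <= nth 0 ss (i + d) - nth 0 ss i)%R.
Proof.
move=> so; elim=> [|d IH] i id; first by rewrite addn0 subrr.
rewrite addnS in id.
have h1 := IH i (ltnW id).
have h2 : (nth 0 ss (i + d) < nth 0 ss (i + d).+1)%R.
  by apply: (sorted_ltn_nth lt_trans) => //; rewrite inE //; apply: ltnW.
rewrite addnS; lia.
Qed.

Section Part1.
Variable R : realType.

Lemma part1 (K : R) (f : {poly rat}) : 0 < K -> int_valued f ->
  (1 <= (size f).-1)%N ->
  count_at_most (fun m : int => `|ratr f.[m%:~R] : R| <= K)
    (((size f).-1)%:R + 4 * ((K * (((size f).-1)`!)%:R) `^ ((((size f).-1)%:R)^-1))).
Proof.
move=> K0 fi n1 s us Ps.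
set n := (size f).-1.
have sf : size f = n.+1 by rewrite /n prednK //; move: n1; case: (size f).
set F := map_poly (ratr : rat -> R) f.
have sF : size F = n.+1 by rewrite size_map_poly.
have lF : 1 <= `|lead_coef F| * n`!%:R.
  rewrite lead_coef_map -ratr_nat -ratr_norm -rmorphM /= -[1](rmorph1 (@ratr R)) ler_rat.
  rewrite mulrC -normr_nat -normrM; apply: norm_intr_ge1; first exact: int_lead.
  rewrite mulf_neq0 // ?pnatr_eq0 -?lt0n ?fact_gt0 // lead_coef_eq0 -size_poly_gt0 sf //.
set ss := sort <=%O s.
have so : sorted <%O ss by rewrite sort_lt_sorted.
have sz : size ss = size s by rewrite size_sort.
pose t (i : nat) : R := (nth 0 ss i)%:~R.
have tgap : forall i j, (i <= j)%N -> (j < size s)%N -> j%:R - i%:R <= t j - t i.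
  move=> i j ij js; rewrite -(subnKC ij) natrD addrAC subrr add0r /t -intrB.
  rewrite -[_%:R]/((j - i)%:Z%:~R) ler_int; apply: sorted_gap => //.
  by rewrite subnKC // sz.
have tK : forall i, (i < size s)%N -> `|F.[t i]| <= K.
  move=> i iss; rewrite /t -ratr_int horner_map; apply: Ps.
  by rewrite -(perm_mem (permEl (perm_sort <=%O s))) mem_nth // sz.
have n0 : (0 < n)%N by [].
exact: (@main_count R n (size s) F K t n0 K0 sF lF tgap tK).
Qed.
End Part1.
Section Asym.
Variable R : realType.
Local Notation E := (expR (1 : R)).

Lemma exp_bound (v : R) : expR v <= 1 + `|v| * expR `|v|.
Proof.
have e0 := expR_gt0 v.
case: (lerP v 0) => hv.
  have : expR v <= 1 by rewrite expR_le1.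
  have := expR_gt0 `|v|; have := normr_ge0 v; nra.
rewrite gtr0_norm //.
have h1 := expRxMexpNx_1 v.
have h2 := expR_ge1Dx (- v).
nra.
Qed.

Lemma e_le (n : nat) : (1 <= n)%N -> E * n%:R ^+ n.+1 <= n.+1%:R ^+ n.+1.
Proof.
move=> n1.
have n0 : (0 : R) < n%:R by rewrite ltr0n.
have n10 : (0 : R) < n.+1%:R by rewrite ltr0n.
set x := (n.+1%:R : R)^-1.
have x0 : 0 < x by rewrite invr_gt0.
have h1 : 1 - x <= expR (- x) by have := expR_ge1Dx (- x); lra.
have h2 : 1 - x = n%:R / n.+1%:R.
  by rewrite /x -natr1; field; rewrite natr1 gt_eqF.
have h3 : expR x <= n.+1%:R / n%:R.
  rewrite expRN in h1; rewrite h2 in h1.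
  have hp : 0 < n%:R / n.+1%:R :> R by rewrite divr_gt0.
  rewrite -(invrK (expR x)) -[n.+1%:R / n%:R](invf_div) lef_pV2 ?posrE ?invr_gt0 ?expR_gt0 //.
have -> : E = expR x ^+ n.+1.
  by rewrite -expRM_natl /x mulfV // gt_eqF.
have : expR x ^+ n.+1 <= (n.+1%:R / n%:R) ^+ n.+1.
  by rewrite lerXn2r // ?nnegrE ?ltW ?expR_gt0 // divr_gt0.
move=> H; have nn : (0 : R) <= n%:R ^+ n.+1 by rewrite exprn_ge0 // ltW.
apply: (le_trans (ler_wpM2r nn H)).
by rewrite -exprMn divfK // gt_eqF.
Qed.

Lemma fact_bound (n : nat) : (1 <= n)%N -> n`!%:R * expR n%:R <= E * n%:R ^+ n.+1 :> R.
Proof.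
elim: n => [//|m IH] _.
case: m IH => [|m] IH.
  by rewrite mul1r expr1n mulr1.
set k := m.+1.
have IH' := IH isT.
have e0 : 0 < E := expR_gt0 1.
have c0 : (0 : R) < k.+1%:R by rewrite ltr0n.
have key := e_le k isT.
have f1 : (k.+1)`!%:R = k.+1%:R * k`!%:R :> R by rewrite factS natrM.
have f2 : expR k.+1%:R = expR k%:R * E by rewrite -natr1 expRD.
have f3 : k.+1%:R ^+ k.+2 = k.+1%:R * k.+1%:R ^+ k.+1 :> R by rewrite exprS.
rewrite f1 f2 f3.
have -> : (k.+1%:R * k`!%:R * (expR k%:R * expR 1) : R) = (k.+1%:R * E) * (k`!%:R * expR k%:R)
  by ring.
have cE : 0 < k.+1%:R * E :> R by apply: mulr_gt0.
apply: (@le_trans _ _ ((k.+1%:R * E) * (E * k%:R ^+ k.+1))).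
  by rewrite ler_pM2l.
have -> : (k.+1%:R * E * (E * k%:R ^+ k.+1) : R) = (E * k.+1%:R) * (E * k%:R ^+ k.+1)
  by ring.
by rewrite -mulrA ler_pM2l // ler_pM2l.
Qed.

Lemma asym (K : R) : 0 < K -> exists C : R, forall n : nat, (2 <= n)%N ->
  n%:R + 4 * ((K * n`!%:R) `^ (n%:R^-1)) <= (1 + 4 / E) * n%:R + C * ln n%:R.
Proof.
move=> K0.
have e0 : 0 < E := expR_gt0 1.
set L := `|ln (K * E)|.
set A := L + 1.
have L0 : 0 <= L := normr_ge0 _.
have l2 : 0 < ln (2 : R) by apply: ln_gt0; rewrite ltr1n.
have eA : 0 < expR A := expR_gt0 A.
exists (4 * expR A / E * (L / ln 2 + 1)).
move=> n n2.
have n0 : (0 : R) < n%:R by rewrite ltr0n; apply: leq_trans n2.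
have n1 : (1 : R) <= n%:R by rewrite ler1n; apply: leq_trans n2.
have n2R : (2%:R : R) <= n%:R by rewrite ler_nat.
have lnn2 : ln 2 <= ln (n%:R : R).
  by rewrite ler_ln ?posrE; lra.
have lnn0 : 0 < ln (n%:R : R) by lra.
have lnnle : ln (n%:R : R) <= n%:R by apply/ltW/ln_sublinear.
set Fn := K * n`!%:R.
have Fn0 : 0 < Fn by rewrite mulr_gt0 // ltr0n fact_gt0.
have hX : Fn `^ n%:R^-1 = expR (n%:R^-1 * ln Fn) by rewrite /powR gt_eqF.
have hfb := fact_bound n (leq_trans (isT : (1 <= 2)%N) n2).
have KEn0 : 0 < K * E * n%:R by rewrite !mulr_gt0.
set w := ln (K * E).
set lnn := ln (n%:R : R) in lnn2 lnn0 lnnle *.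
have hln : ln Fn + n%:R <= w + lnn + n%:R * lnn.
  have h1 : Fn * expR n%:R <= (K * E * n%:R) * n%:R ^+ n.
    have -> : Fn * expR n%:R = K * (n`!%:R * expR n%:R) by rewrite /Fn mulrA.
    have -> : K * E * n%:R * n%:R ^+ n = K * (E * n%:R ^+ n.+1) by rewrite exprS; ring.
    by rewrite ler_pM2l.
  have p1 : Fn * expR n%:R \in Num.pos by rewrite posrE mulr_gt0 ?expR_gt0.
  have p2 : (K * E * n%:R) * n%:R ^+ n \in Num.pos by rewrite posrE mulr_gt0 ?exprn_gt0.
  move: h1; rewrite -ler_ln // lnM ?posrE ?expR_gt0 // expRK lnM ?posrE ?exprn_gt0 //.
  rewrite lnXn //.
  have e1 : ln (K * E * n%:R) = w + lnn by rewrite lnM ?posrE ?mulr_gt0.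
  have e2 : lnn *+ n = n%:R * lnn by rewrite mulr_natl.
  rewrite e1 e2; lra.
set v := (w + lnn) / n%:R.
have hv : n%:R^-1 * ln Fn <= lnn - 1 + v.
  rewrite -(ler_pM2l n0) mulrA mulfV ?gt_eqF // mul1r.
  have -> : n%:R * (lnn - 1 + v) = n%:R * lnn - n%:R + (w + lnn).
    by rewrite /v; field; rewrite gt_eqF.
  lra.
have hX2 : Fn `^ n%:R^-1 <= n%:R / E * expR v.
  rewrite hX; apply: (le_trans (_ : _ <= expR (lnn - 1 + v))).
    by rewrite ler_expR.
  by rewrite !expRD expRN lnK ?posrE.
have hwl : `|w + lnn| <= L + lnn.
  by apply: (le_trans (ler_normD _ _)); rewrite (gtr0_norm lnn0).
have nv : n%:R * `|v| = `|w + lnn|.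
  by rewrite /v normrM normfV (gtr0_norm n0) mulrC divfK // gt_eqF.
have vA : `|v| <= A.
  rewrite -(ler_pM2l n0) nv; apply: (le_trans hwl).
  rewrite /A mulrDr mulr1; have : L <= n%:R * L by nra.
  lra.
have hexp : expR v <= 1 + `|v| * expR A.
  apply: (le_trans (exp_bound v)); rewrite lerD2l ler_wpM2l //.
  by rewrite ler_expR.
have hX3 : Fn `^ n%:R^-1 <= n%:R / E + (L + lnn) * (expR A / E).
  apply: (le_trans hX2).
  have nE : 0 <= n%:R / E by rewrite divr_ge0 // ltW.
  apply: (le_trans (ler_wpM2l nE hexp)).
  have -> : n%:R / E * (1 + `|v| * expR A) = n%:R / E + (n%:R * `|v|) * (expR A / E).
    by field; rewrite gt_eqF.
  rewrite lerD2l nv ler_wpM2r // divr_ge0 // ltW.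
have hL : L <= L / ln 2 * lnn.
  have r : 1 <= lnn / ln 2 by rewrite ler_pdivlMr // mul1r.
  have -> : L / ln 2 * lnn = L * (lnn / ln 2) by rewrite mulrAC mulrA.
  nra.
have B0 : 0 < expR A / E by rewrite divr_gt0.
have : (L + lnn) * (expR A / E) <= (L / ln 2 + 1) * lnn * (expR A / E).
  by rewrite ler_pM2r // mulrDl mul1r lerD2r.
move: hX3; set B := expR A / E; set Xn := Fn `^ _.
move=> hX3 hB.
have -> : 4 * expR A / E * (L / ln 2 + 1) * lnn = 4 * ((L / ln 2 + 1) * lnn * B) by rewrite /B; ring.
have -> : (1 + 4 / E) * n%:R = n%:R + 4 * (n%:R / E) by ring.
lra.
Qed.

End Asym.
Theorem mainTheorem8 (R : realType) :
  (* Part 1 *)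
  (forall (K : R) (f : {poly rat}), 0 < K -> int_valued f ->
     let n := (size f).-1 in (1 <= n)%N ->
     count_at_most (fun m : int => `|ratr f.[m%:~R] : R| <= K)
       (n%:R + 4 * ((K * (n`!)%:R) `^ (n%:R^-1))))
  /\
  (* Part 2: E_S(f) <= (1 + 4/e) n + O(log n), constant depending only on K *)
  (forall K : R, 0 < K -> exists C : R,
     forall (f : {poly rat}) (S : seq int),
       int_valued f -> (2 <= (size f).-1)%N ->
       (forall s, s \in S -> (`|s|%:~R : R) <= K) ->
       count_at_most (fun m : int => exists2 s, s \in S & f.[m%:~R] = s%:~R)
         ((1 + 4 / expR 1) * ((size f).-1)%:R + C * ln (((size f).-1)%:R))).
Proof.
split.
  move=> K f K0 fi n n1.
  exact: (@part1 R K f K0 fi n1).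
move=> K K0; have [C HC] := @asym R K K0.
exists C => f S fi n2 HS s us Ps.
have n1 : (1 <= (size f).-1)%N by apply: leq_trans n2.
apply: (le_trans (@part1 R K f K0 fi n1 s us _)); last exact: HC.
move=> m /Ps [s0 s0S ->]; rewrite ratr_int -intr_norm; exact: HS.
Qed.
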